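(* Let \(X\) be a nonempty set and let \(\Phi\) be a mapping with domain \(X^{2}\). Then the following conditions are equivalent. (i) There is a totally ordered set \(Q\) such that \(\Phi\) is combinatorially similar to a \(Q\)-pseudoultrametric. (ii) There is a poset \(Q\) such that \(\Phi\) is combinatorially similar to a \(Q\)-pseudoultrametric. (iii) \(\Phi\) is symmetric, the transitive closure \(u_{\Phi}^{t}\) of \(u_{\Phi}\) is antisymmetric, there is \(a_0 \in \Phi(X^{2})\) for which \(\Phi\) is \(a_0\)-coherent, and for every triple \(\langle x_1, x_2, x_3\rangle\) of points of \(X\) there is a permutation \((i_1,i_2,i_3)\) of \((1,2,3)\) such that \(\Phi(x_{i_1}, x_{i_2}) = \Phi(x_{i_2}, x_{i_3})\). (iv) There is \(b_0 \in \Phi(X^{2})\) such that \(\Phi(x,x) = b_0\) for every \(x \in X\), the binary relation \(\preccurlyeq_{\Phi} := u_{\Phi}^{t} \cup \Delta_{\Phi(X^{2})}\) (where \(\Delta_{\Phi(X^2)}=\{\langle b,b\rangle: b\in\Phi(X^2)\}\)) is a partial order on \(\Phi(X^{2})\), \(b_0\) is the smallest element of \((\Phi(X^{2}), \preccurlyeq_{\Phi})\), and \(\Phi\) is a \(\preccurlyeq_{\Phi}\)-pseudoultrametric on \(X\).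
   Context: For a mapping \(F\) with domain \(A\), \(F(A)\) denotes its range. Let \((Q,\preccurlyeq_Q)\) be a poset with a smallest element \(q_0\) and \(Z\) a nonempty set. A mapping \(d\colon Z^2\to Q\) is a \(Q\)-pseudoultrametric (= \(\preccurlyeq_Q\)-pseudoultrametric) if \(d\) is symmetric, \(d(z,z)=q_0\) for all \(z\in Z\), and for every triple \(\langle z_1,z_2,z_3\rangle\) of points of \(Z\) there is a permutation \((i_1,i_2,i_3)\) of \((1,2,3)\) with \(d(z_{i_1},z_{i_3})\preccurlyeq_Q d(z_{i_1},z_{i_2})\) and \(d(z_{i_1},z_{i_2})=d(z_{i_2},z_{i_3})\). For nonempty sets \(X,Y\) and mappings \(\Phi\) with domain \(X^2\), \(\Psi\) with domain \(Y^2\), \(\Phi\) is combinatorially similar to \(\Psi\) if there are bijections \(f\colon \Phi(X^2)\to\Psi(Y^2)\) and \(g\colon Y\to X\) with \(\Psi(x,y)=f(\Phi(g(x),g(y)))\) for all \(x,y\in Y\). \(\Phi\) with domain \(X^2\) is strongly consistent with an equivalence relation \(R\) on \(X\) if \(\langle x_1,x_2\rangle\in R\), \(\langle x_3,x_4\rangle\in R\) imply \(\Phi(x_1,x_3)=\Phi(x_2,x_4)\); for \(a_0\in\Phi(X^2)\), \(\Phi\) is \(a_0\)-coherent if \(\Phi^{-1}(a_0)\) is an equivalence relation on \(X\) and \(\Phi\) is strongly consistent with it. For \(\Phi\) with domain \(X^2\) and \(Y=\Phi(X^2)\), \(\langle y_1,y_2\rangle\in u_\Phi\) iff \(y_1,y_2\in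 Y\) and there are \(x_1,x_2,x_3\in X\) with \(y_1=\Phi(x_1,x_3)\) and \(y_2=\Phi(x_1,x_2)=\Phi(x_2,x_3)\). The transitive closure is \(\gamma^t=\bigcup_{n\ge1}\gamma^n\) with \(\gamma^{n+1}=\gamma^n\circ\gamma\), where \(\langle x,y\rangle\in\alpha\circ\beta\) iff there is \(z\) with \(\langle x,z\rangle\in\alpha\), \(\langle z,y\rangle\in\beta\). *)

(* Defs.v *)
Definition in_range {X A : Type} (Phi : X -> X -> A) (a : A) : Prop :=
  exists x y, Phi x y = a.

Definition some_perm {Z : Type} (P : Z -> Z -> Z -> Prop) (z1 z2 z3 : Z) : Prop :=
  P z1 z2 z3 \/ P z1 z3 z2 \/ P z2 z1 z3 \/ P z2 z3 z1 \/ P z3 z1 z2 \/ P z3 z2 z1.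

Definition poset {Q : Type} (le : Q -> Q -> Prop) : Prop :=
  (forall q, le q q) /\
  (forall p q, le p q -> le q p -> p = q) /\
  (forall p q r, le p q -> le q r -> le p r).

Definition total_order {Q : Type} (le : Q -> Q -> Prop) : Prop :=
  poset le /\ (forall p q, le p q \/ le q p).

Definition smallest {Q : Type} (le : Q -> Q -> Prop) (q0 : Q) : Prop :=
  forall q, le q0 q.

(* d is a (le)-pseudoultrametric with value q0 on the diagonal
   (the requirement that q0 is the smallest element of the poset is stated
   separately where needed) *)
Definition pseudoultrametric {Z Q : Type} (le : Q -> Q -> Prop) (q0 : Q)
  (d : Z -> Z -> Q) : Prop :=
  (forall x y, d x y = d y x) /\
  (forall z, d z z = q0) /\
  (forall z1 z2 z3,
     some_perm (fun a b c => le (d a c) (d a b) /\ d a b = d b c) z1 z2 z3).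

Definition comb_similar {X A Y B : Type} (Phi : X -> X -> A) (Psi : Y -> Y -> B)
  : Prop :=
  exists (f : A -> B) (g : Y -> X),
    (forall a, in_range Phi a -> in_range Psi (f a)) /\
    (forall a a', in_range Phi a -> in_range Phi a' -> f a = f a' -> a = a') /\
    (forall b, in_range Psi b -> exists a, in_range Phi a /\ f a = b) /\
    (forall y y', g y = g y' -> y = y') /\
    (forall x, exists y, g y = x) /\
    (forall x y, Psi x y = f (Phi (g x) (g y))).

Definition symmetric_map {X A : Type} (Phi : X -> X -> A) : Prop :=
  forall x y, Phi x y = Phi y x.

Definition u_rel {X A : Type} (Phi : X -> X -> A) (y1 y2 : A) : Prop :=
  in_range Phi y1 /\ in_range Phi y2 /\
  exists x1 x2 x3, y1 = Phi x1 x3 /\ y2 = Phi x1 x2 /\ Phi x1 x2 = Phi x2 x3.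

Definition rcomp {T : Type} (al be : T -> T -> Prop) (x y : T) : Prop :=
  exists z, al x z /\ be z y.

Fixpoint rpow {T : Type} (g : T -> T -> Prop) (n : nat) : T -> T -> Prop :=
  match n with
  | O => g            (* unused index: gamma^1 is rpow g 1 *)
  | S O => g
  | S m => rcomp (rpow g m) g
  end.

Definition tclos {T : Type} (g : T -> T -> Prop) (x y : T) : Prop :=
  exists n, 1 <= n /\ rpow g n x y.

Definition antisymmetric {T : Type} (R : T -> T -> Prop) : Prop :=
  forall x y, R x y -> R y x -> x = y.

Definition equivalence_rel {T : Type} (R : T -> T -> Prop) : Prop :=
  (forall x, R x x) /\ (forall x y, R x y -> R y x) /\
  (forall x y z, R x y -> R y z -> R x z).

Definition strongly_consistent {X A : Type} (Phi : X -> X -> A)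
  (R : X -> X -> Prop) : Prop :=
  forall x1 x2 x3 x4, R x1 x2 -> R x3 x4 -> Phi x1 x3 = Phi x2 x4.

Definition coherent {X A : Type} (Phi : X -> X -> A) (a0 : A) : Prop :=
  equivalence_rel (fun x y => Phi x y = a0) /\
  strongly_consistent Phi (fun x y => Phi x y = a0).

Definition le_Phi {X A : Type} (Phi : X -> X -> A) (a b : A) : Prop :=
  tclos (u_rel Phi) a b \/ (in_range Phi a /\ a = b).

Definition poset_on {A : Type} (S : A -> Prop) (le : A -> A -> Prop) : Prop :=
  (forall a b, le a b -> S a /\ S b) /\
  (forall a, S a -> le a a) /\
  (forall a b, S a -> S b -> le a b -> le b a -> a = b) /\
  (forall a b c, S a -> S b -> S c -> le a b -> le b c -> le a c).

(* Main.v *)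
From Stdlib Require Import Relations Lia.
From Stdlib Require Import Classical ClassicalEpsilon FunctionalExtensionality PropExtensionality ProofIrrelevance.
Require Import Defs.
From mathcomp Require ssreflect ssrbool boolp classical_sets.

Module LinExt.
Import ssreflect ssrbool boolp classical_sets.

Section S.
Variables (A : Type) (S : A -> Prop) (le : A -> A -> Prop).
Hypothesis po : poset_on S le.

Definition T := {R : A -> A -> Prop | poset_on S R /\ (forall a b, le a b -> R a b)}.
Definition Rb : rel T := fun s t => `[< forall a b, proj1_sig s a b -> proj1_sig t a b >].

Lemma lin_ext : exists le', poset_on S le' /\ (forall a b, le a b -> le' a b) /\
  (forall a b, S a -> S b -> le' a b \/ le' b a).
Proof.
have [t tmax] : exists t, forall s, Rb t s -> s = t.
  apply: Zorn.
  - by move=> s; apply/asboolP.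
  - by move=> r s t /asboolP H1 /asboolP H2; apply/asboolP => a b /H1 /H2.
  - move=> [R1 p1] [R2 p2] /asboolP /= H1 /asboolP /= H2.
    have E : R1 = R2.
      apply: functional_extensionality => a; apply: functional_extensionality => b.
      by apply: propositional_extensionality; split => [/H1|/H2].
    subst R2; congr exist; exact: proof_irrelevance.
  - move=> C Ctot.
    pose U a b := le a b \/ exists s, C s /\ proj1_sig s a b.
    have Ulift : forall a b c e, U a b -> U c e ->
       (le a b /\ le c e) \/ exists s, C s /\ proj1_sig s a b /\ proj1_sig s c e.
      move=> a b c e [h1|[s [Cs h1]]] [h2|[s' [Cs' h2]]].
      + by left.
      + right; exists s'; split=> //; split=> //; exact: (proj2 (proj2_sig s')).
      + right; exists s; split=> //; split=> //; exact: (proj2 (proj2_sig s)).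
      + have [/asboolP h|/asboolP h] := Ctot _ _ Cs Cs'.
        * by right; exists s'; split=> //; split=> //; apply: h.
        * by right; exists s; split=> //; split=> //; apply: h.
    have poU : poset_on S U.
      case: po => [pd [pr [pa pt]]].
      split; [|split; [|split]].
      + move=> a b [h|[s [_ h]]]; first exact: pd.
        exact: (proj1 (proj1 (proj2_sig s))).
      + by move=> a Sa; left; apply: pr.
      + move=> a b Sa Sb h1 h2; have [[l1 l2]|[s [_ [l1 l2]]]] := Ulift _ _ _ _ h1 h2.
        * exact: pa.
        * exact: (proj1 (proj2 (proj2 (proj1 (proj2_sig s))))) l1 l2.
      + move=> a b c Sa Sb Sc h1 h2; have [[l1 l2]|[s [Cs [l1 l2]]]] := Ulift _ _ _ _ h1 h2.
        * by left; apply: (pt a b c).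
        * right; exists s; split=> //.
          exact: (proj2 (proj2 (proj2 (proj1 (proj2_sig s))))) l1 l2.
    have leU : forall a b, le a b -> U a b by move=> a b h; left.
    exists (exist _ U (conj poU leU)) => s Cs; apply/asboolP => a b h /=.
    by right; exists s.
exists (proj1_sig t).
case: (proj2_sig t) => pM leM.
split=> //; split=> //.
move=> a b Sa Sb.
case: (Classical_Prop.classic (proj1_sig t a b)) => hab; first by left.
case: (Classical_Prop.classic (proj1_sig t b a)) => hba; first by right.
exfalso.
set M := proj1_sig t in pM leM hab hba.
case: pM => [pd [pr [pa pt]]].
pose M' x y := M x y \/ (M x a /\ M b y).
have poM' : poset_on S M'.
  split; [|split; [|split]].
  - move=> x y [h|[h1 h2]]; first exact: pd.
    by split; [exact: (proj1 (pd _ _ h1))|exact: (proj2 (pd _ _ h2))].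
  - by move=> x Sx; left; apply: pr.
  - move=> x y Sx Sy [h1|[h1 h1']] [h2|[h2 h2']].
    + exact: pa.
    + exfalso; apply: hba.
      apply: (pt b x a) => //; apply: (pt x y a) => //.
    + exfalso; apply: hba.
      apply: (pt b y a) => //; apply: (pt y x a) => //.
    + exfalso; apply: hba.
      exact: (pt b y a).
  - move=> x y z Sx Sy Sz [h1|[h1 h1']] [h2|[h2 h2']].
    + by left; apply: (pt x y z).
    + have Sa' := proj2 (pd _ _ h2).
      by right; split=> //; apply: (pt x y a).
    + have Sb' := proj1 (pd _ _ h1').
      by right; split=> //; apply: (pt b y z).
    + exfalso; apply: hba.
      have Sa' := proj2 (pd _ _ h2); have Sb' := proj1 (pd _ _ h1').
      exact: (pt b y a).
have leM' : forall x y, le x y -> M' x y by move=> x y h; left; apply: leM.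
have := tmax (exist _ M' (conj poM' leM')).
have H : Rb t (exist _ M' (conj poM' leM')).
  by apply/asboolP => x y h /=; left.
move=> /(_ H) E.
have : M' a b by right; split; apply: pr.
have -> : M' = M by have := f_equal (@proj1_sig _ _) E.
exact: hab.
Qed.
End S.
End LinExt.

Lemma rpow_ind {T} (R P : T -> T -> Prop) :
  (forall a b, R a b -> P a b) -> (forall a b c, P a b -> P b c -> P a c) ->
  forall n a b, rpow R n a b -> P a b.
Proof.
  intros HR HT n; induction n as [|n IH]; intros a b H.
  - now apply HR.
  - destruct n as [|k].
    + now apply HR.
    + change (rcomp (rpow R (S k)) R a b) in H.
      destruct H as [z [H1 H2]]. eapply HT; [apply IH; exact H1 | apply HR; exact H2].
Qed.

Lemma tclos_ind {T} (R P : T -> T -> Prop) :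
  (forall a b, R a b -> P a b) -> (forall a b c, P a b -> P b c -> P a c) ->
  forall a b, tclos R a b -> P a b.
Proof. intros HR HT a b [n [_ H]]. eapply rpow_ind; eauto. Qed.

Lemma tclos_step {T} (R : T -> T -> Prop) a b : R a b -> tclos R a b.
Proof. intros H. exists 1. split; [constructor | exact H]. Qed.

Lemma tclos_trans {T} (R : T -> T -> Prop) a b c :
  tclos R a b -> tclos R b c -> tclos R a c.
Proof.
  intros H1 H2.
  assert (E : forall x y, clos_trans T R x y -> tclos R x y).
  { intros x y H. apply clos_trans_tn1 in H. induction H as [y Hy|y z Hyz Hxy IH].
    - now apply tclos_step.
    - destruct IH as [n [Hn Hp]]. destruct n as [|k]; [inversion Hn|].
      exists (S (S k)). split; [lia|].
      change (rcomp (rpow R (S k)) R x z). exists y; split; assumption. }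
  assert (F : forall x y, tclos R x y -> clos_trans T R x y).
  { apply tclos_ind; [intros; apply t_step; assumption | intros x y z p q; exact (t_trans _ _ x y z p q)]. }
  apply E. exact (t_trans _ _ a b c (F _ _ H1) (F _ _ H2)).
Qed.

Lemma some_perm_map {Z W} (P : Z -> Z -> Z -> Prop) (P' : W -> W -> W -> Prop) (h : Z -> W) :
  (forall a b c, P a b c -> P' (h a) (h b) (h c)) ->
  forall z1 z2 z3, some_perm P z1 z2 z3 -> some_perm P' (h z1) (h z2) (h z3).
Proof. intros H z1 z2 z3 Hs; unfold some_perm in *; intuition auto. Qed.

Section PU.
Variables (Q Y : Type) (le : Q -> Q -> Prop) (q0 : Q) (d : Y -> Y -> Q).
Hypothesis po : poset le.
Hypothesis sm : smallest le q0.
Hypothesis pu : pseudoultrametric le q0 d.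

Lemma lq0 x : le x q0 -> x = q0.
Proof. intros H. destruct po as [_ [pa _]]. apply pa; auto. Qed.

Lemma pu_L1 a b c : d a b = q0 -> d a c = d b c.
Proof.
  intros H. destruct pu as [ds [_ tri]].
  pose proof (ds a b); pose proof (ds b c); pose proof (ds a c).
  destruct (tri a b c) as [[l e]|[[l e]|[[l e]|[[l e]|[[l e]|[l e]]]]]];
  first [congruence |
    match type of l with le ?X ?Y =>
      assert (Y = q0) by congruence;
      assert (X = q0) by (apply lq0; replace q0 with Y by assumption; exact l);
      congruence end].
Qed.

Lemma pu_L3 a b c : d a b = d b c -> le (d a c) (d a b).
Proof.
  intros H. destruct pu as [ds [_ tri]]. destruct po as [pr _].
  pose proof (ds a b); pose proof (ds b c); pose proof (ds a c).
  destruct (tri a b c) as [[l e]|[[l e]|[[l e]|[[l e]|[[l e]|[l e]]]]]];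
  first [ assert (E : d a c = d a b) by congruence; rewrite E; apply pr |
    match type of l with le ?X ?Y =>
      replace (d a c) with X by congruence; replace (d a b) with Y by congruence;
      exact l end].
Qed.
End PU.

Theorem theorem3p18 (X A : Type) (Phi : X -> X -> A) (hX : inhabited X) :
  let cond_i :=
    exists (Q : Type) (le : Q -> Q -> Prop) (q0 : Q) (Y : Type) (d : Y -> Y -> Q),
      total_order le /\ smallest le q0 /\ inhabited Y /\
      pseudoultrametric le q0 d /\ comb_similar Phi d in
  let cond_ii :=
    exists (Q : Type) (le : Q -> Q -> Prop) (q0 : Q) (Y : Type) (d : Y -> Y -> Q),
      poset le /\ smallest le q0 /\ inhabited Y /\
      pseudoultrametric le q0 d /\ comb_similar Phi d in
  let cond_iii :=
    symmetric_map Phi /\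
    antisymmetric (tclos (u_rel Phi)) /\
    (exists a0, in_range Phi a0 /\ coherent Phi a0) /\
    (forall x1 x2 x3,
       some_perm (fun a b c => Phi a b = Phi b c) x1 x2 x3) in
  let cond_iv :=
    exists b0, in_range Phi b0 /\
      (forall x, Phi x x = b0) /\
      poset_on (in_range Phi) (le_Phi Phi) /\
      (forall b, in_range Phi b -> le_Phi Phi b0 b) /\
      pseudoultrametric (le_Phi Phi) b0 Phi in
  (cond_i <-> cond_ii) /\ (cond_ii <-> cond_iii) /\ (cond_iii <-> cond_iv).
Proof.
  intros ci cii ciii civ.
  assert (H12 : ci -> cii).
  { intros [Q [le [q0 [Y [d [[po _] R]]]]]]. exists Q, le, q0, Y, d. split; assumption. }
  assert (H23 : cii -> ciii).
  { intros [Q [le [q0 [Y [d [po [sm [[y0] [pu [f [g [Hf1 [Hf2 [Hf3 [Hg1 [Hg2 Hfg]]]]]]]]]]]]]]]].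
    assert (rg : forall x y, in_range Phi (Phi x y)) by (intros x y; exists x, y; reflexivity).
    assert (Peq : forall y1 y2 y3 y4, d y1 y2 = d y3 y4 -> Phi (g y1) (g y2) = Phi (g y3) (g y4)).
    { intros y1 y2 y3 y4 E. apply Hf2; try apply rg. rewrite <- !Hfg. exact E. }
    destruct pu as [ds [dd tri]].
    assert (sym : symmetric_map Phi).
    { intros x y. destruct (Hg2 x) as [z1 <-]. destruct (Hg2 y) as [z2 <-]. apply Peq, ds. }
    split; [exact sym|]. split; [|split].
    - assert (Hu : forall a b, u_rel Phi a b -> le (f a) (f b)).
      { intros a b [_ [_ [x1 [x2 [x3 [-> [-> E]]]]]]].
        destruct (Hg2 x1) as [z1 <-]. destruct (Hg2 x2) as [z2 <-]. destruct (Hg2 x3) as [z3 <-].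
        rewrite <- !Hfg. apply (pu_L3 Q Y le q0 d po (conj ds (conj dd tri))).
        rewrite !Hfg. rewrite E. reflexivity. }
      destruct po as [pr [pa pt]].
      intros a b Hab Hba.
      assert (Rab : in_range Phi a /\ in_range Phi b).
      { revert Hab. apply (tclos_ind _ (fun x y => in_range Phi x /\ in_range Phi y)). intros x y [r1 [r2 _]]; tauto. intros x y z [] []; tauto. }
      apply Hf2; try tauto. apply pa.
      + revert Hab. apply (tclos_ind _ (fun x y => le (f x) (f y))); [exact Hu | intros; eapply pt; eauto].
      + revert Hba. apply (tclos_ind _ (fun x y => le (f x) (f y))); [exact Hu | intros; eapply pt; eauto].
    - set (a0 := Phi (g y0) (g y0)).
      assert (K : forall z1 z2, Phi (g z1) (g z2) = a0 <-> d z1 z2 = q0).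
      { intros z1 z2; split; intros E.
        - rewrite Hfg, E. unfold a0. rewrite <- Hfg. apply dd.
        - unfold a0. apply Peq. rewrite dd. exact E. }
      pose proof (pu_L1 Q Y le q0 d po sm (conj ds (conj dd tri))) as L1.
      exists a0. split; [apply rg|]. split; [split; [|split]|].
      + intros x. destruct (Hg2 x) as [z <-]. apply K, dd.
      + intros x y E. rewrite sym. exact E.
      + intros x y z. destruct (Hg2 x) as [z1 <-]. destruct (Hg2 y) as [z2 <-]. destruct (Hg2 z) as [z3 <-].
        rewrite !K. intros E1 E2. rewrite (L1 z1 z2 z3 E1). exact E2.
      + intros x1 x2 x3 x4. destruct (Hg2 x1) as [z1 <-]. destruct (Hg2 x2) as [z2 <-].
        destruct (Hg2 x3) as [z3 <-]. destruct (Hg2 x4) as [z4 <-].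
        rewrite !K. intros E1 E2. apply Peq.
        rewrite (L1 z1 z2 z3 E1), ds, (L1 z3 z4 z2 E2), ds. reflexivity.
    - intros x1 x2 x3. destruct (Hg2 x1) as [z1 <-]. destruct (Hg2 x2) as [z2 <-]. destruct (Hg2 x3) as [z3 <-].
      apply (some_perm_map (fun a b c => le (d a c) (d a b) /\ d a b = d b c)); [|apply tri].
      intros a b c [_ E]. apply Peq. exact E. }
  assert (H34 : ciii -> civ).
  { intros [sym [anti [[a0 [ra0 [[cr [cs ct]] cc]]] tri]]].
    assert (rg : forall x y, in_range Phi (Phi x y)) by (intros x y; exists x, y; reflexivity).
    assert (Rng : forall a b, tclos (u_rel Phi) a b -> in_range Phi a /\ in_range Phi b).
    { apply (tclos_ind _ (fun x y => in_range Phi x /\ in_range Phi y)).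
      intros x y [r1 [r2 _]]; tauto. intros x y z [] []; tauto. }
    assert (Hu : forall x1 x2 x3, Phi x1 x2 = Phi x2 x3 -> le_Phi Phi (Phi x1 x3) (Phi x1 x2)).
    { intros x1 x2 x3 E. left. apply tclos_step. split; [apply rg|]. split; [apply rg|].
      exists x1, x2, x3. auto. }
    exists a0. split; [exact ra0|]. split; [exact cr|]. split; [|split].
    - split; [|split; [|split]].
      + intros a b [H|[H ->]]; [apply Rng; exact H | tauto].
      + intros a Ha. right. auto.
      + intros a b Ha Hb [H1|[_ E1]] [H2|[_ E2]]; auto.
      + intros a b c Ha Hb Hc [H1|[_ E1]] [H2|[_ E2]].
        * left. eapply tclos_trans; eauto.
        * subst. left; auto.
        * subst. left; auto.
        * subst. right; auto.
    - intros b [x [y <-]]. rewrite <- (cr x). apply Hu. apply sym.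
    - split; [exact sym|]. split; [exact cr|].
      intros z1 z2 z3.
      apply (some_perm_map (fun a b c => Phi a b = Phi b c) _ (fun x => x)); [|apply tri].
      intros a b c E. split; [apply Hu; exact E | exact E]. }
  assert (H41 : civ -> ci).
  { intros [b0 [rb0 [diag [po [small [sym [_ tri]]]]]]].
    destruct (LinExt.lin_ext A (in_range Phi) (le_Phi Phi) po) as [le' [[pd [pr [pa pt]]] [ext tot]]].
    set (Q := {a : A | in_range Phi a}).
    set (f := fun a : A => match excluded_middle_informative (in_range Phi a) with
                           | left h => exist (in_range Phi) a h
                           | right _ => exist (in_range Phi) b0 rb0 end).
    assert (fval : forall a, in_range Phi a -> proj1_sig (f a) = a).
    { intros a h. unfold f. destruct (excluded_middle_informative (in_range Phi a)); [reflexivity|contradiction]. }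
    assert (rg : forall x y, in_range Phi (Phi x y)) by (intros x y; exists x, y; reflexivity).
    exists Q, (fun p q : Q => le' (proj1_sig p) (proj1_sig q)), (f b0), X, (fun x y => f (Phi x y)).
    split; [split; [split; [|split]|]|split; [|split; [exact hX|split]]].
    - intros p. apply pr. exact (proj2_sig p).
    - intros [p hp] [q hq]; simpl. intros h1 h2.
      assert (p = q) by (apply pa; auto). subst q. f_equal. apply proof_irrelevance.
    - intros p q r; apply pt; [exact (proj2_sig p)|exact (proj2_sig q)|exact (proj2_sig r)].
    - intros p q. apply tot; [exact (proj2_sig p)|exact (proj2_sig q)].
    - intros q. simpl. change (le' (proj1_sig (f b0)) (proj1_sig q)). rewrite (fval b0 rb0). apply ext, small. exact (proj2_sig q).
    - split; [intros x y; simpl; rewrite sym; reflexivity|]. split; [intros z; simpl; rewrite diag; reflexivity|].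
      intros z1 z2 z3.
      apply (some_perm_map (fun a b c => le_Phi Phi (Phi a c) (Phi a b) /\ Phi a b = Phi b c) _ (fun x => x)); [|apply tri].
      intros a b c [l E]. simpl. rewrite !fval by apply rg. split; [apply ext; exact l|rewrite E; reflexivity].
    - exists f, (fun x => x). split; [|split; [|split; [|split; [|split]]]].
      + intros a [x [y <-]]. exists x, y. reflexivity.
      + intros a a' ha ha' E. rewrite <- (fval a ha), <- (fval a' ha'), E. reflexivity.
      + intros b [x [y <-]]. exists (Phi x y). split; [apply rg|reflexivity].
      + auto.
      + intros x; exists x; reflexivity.
      + intros x y; reflexivity. }
  tauto.
Qed.
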